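(* Let $A=\mathrm{diag}([-1],G_1,\dots,G_m,[1])\in\mathbb{R}^{n\times n}$, $m\geq 1$ (each of $[-1]$, $[1]$ possibly absent), with $G_j=\begin{bmatrix}c_j&s_j\\-s_j&c_j\end{bmatrix}$, $c_j^2+s_j^2=1$, $s_j\neq0$, $-1=c_0<c_1<\cdots<c_m<1=c_{m+1}$. Let $v_0$ be a unit norm vector with $d(A,v_0)\geq 2$ such that $v_0^{(\ell)}\neq 0$ for some $1\leq\ell\leq m$ and $v_0^{(j)}\neq 0$ for some present block index $0\leq j\leq m+1$ with $c_\ell c_j\leq 0$. Then every limit vector $v_*$ of the sequence $\{v_k\}$ of the iteration ACI($1$) below satisfies $v_*^TAv_*=0$, $\|Av_*\|^2-(v_*^TAv_* )^2=1$, and $$\min_{\alpha\in\mathbb{R}}\|A-\alpha I\|=\|A\|=\|Av_*\|=1.$$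
   Context: Block partitioning: $v=[v^{(0)};v^{(1)};\dots;v^{(m)};v^{(m+1)}]$ with $v^{(0)}\in\mathbb{R}$ present only if the block $[-1]$ is, $v^{(j)}\in\mathbb{R}^2$ for $1\leq j\leq m$ (conforming with $G_j$), and $v^{(m+1)}\in\mathbb{R}$ present only if the block $[1]$ is. ACI($1$): for $k=0,1,2,\dots$: $\widetilde w_k=(A-\alpha_kI)v_k$ with $\alpha_k=v_k^TAv_k$; $w_k=\widetilde w_k/\|\widetilde w_k\|$; $\widetilde v_{k+1}=(A^T-\beta_kI)w_k$ with $\beta_k=w_k^TAw_k$; $v_{k+1}=\widetilde v_{k+1}/\|\widetilde v_{k+1}\|$. $d(A,v)$ is the grade of $v$ w.r.t. $A$ (degree of the monic polynomial $p$ of smallest degree with $p(A)v=0$); $\|\cdot\|$ is the Euclidean vector norm and the induced spectral matrix norm. *)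

(* Defs.v *)
From mathcomp Require Import all_boot all_order all_algebra.
From mathcomp Require Import boolp classical_sets reals.
Set Implicit Arguments. Unset Strict Implicit. Unset Printing Implicit Defensive.
Import Order.TTheory GRing.Theory Num.Theory.
Local Open Scope ring_scope.

Definition peval (R : comNzRingType) n (A : 'M[R]_n) (p : {poly R}) (v : 'cV[R]_n) : 'cV[R]_n :=
  \sum_(i < size p) p`_i *: (A ^+ i *m v).
Lemma peval_ex (R : comNzRingType) n (A : 'M[R]_n) v :
  exists d, `[< exists p : {poly R}, [/\ p \is monic, size p = d.+1 & peval A p v = 0] >].
Proof.
case: n A v => [|n] A v.
  exists 0; apply/asboolP; exists 1; split; rewrite ?monic1 ?size_poly1 //.
  by apply/matrixP => -[].
exists n.+1; apply/asboolP; exists (char_poly A); split.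
- exact: char_poly_monic.
- exact: size_char_poly.
have := Cayley_Hamilton A.
rewrite /horner_mx /horner_morph horner_coef => H.
rewrite size_map_inj_poly in H; last 2 first.
- by move=> a b /matrixP /(_ ord0 ord0); rewrite !mxE eqxx !mulr1n.
- by apply/matrixP=> i j; rewrite !mxE mul0rn.
rewrite /peval -[RHS](mul0mx _ v) -H mulmx_suml.
apply: eq_bigr => i _; rewrite coef_map /=.
by rewrite -mulmxE mul_scalar_mx scalemxAl.
Qed.

(* Grade d(A,v): degree of the monic polynomial p of smallest degree with p(A)v = 0. *)
Definition grade (R : comNzRingType) n (A : 'M[R]_n) (v : 'cV[R]_n) : nat :=
  ex_minn (peval_ex A v).

Definition vnorm (R : realType) n (x : 'cV[R]_n) : R := Num.sqrt (\sum_i x i ord0 ^+ 2).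

Definition opnorm (R : realType) n (M : 'M[R]_n) : R :=
  sup [set vnorm (M *m x) | x in [set x : 'cV[R]_n | vnorm x = 1]]%classic.

Definition qform (R : comNzRingType) n (M : 'M[R]_n) (x y : 'cV[R]_n) : R :=
  (x^T *m M *m y) ord0 ord0.

Definition aci_step (R : realType) n (A : 'M[R]_n) (v : 'cV[R]_n) : 'cV[R]_n :=
  let alpha := qform A v v in
  let wt := (A - alpha%:M) *m v in
  let w := (vnorm wt)^-1 *: wt in
  let beta := qform A w w in
  let vt := (A^T - beta%:M) *m w in
  (vnorm vt)^-1 *: vt.

Definition aci (R : realType) n (A : 'M[R]_n) (v0 : 'cV[R]_n) (k : nat) : 'cV[R]_n :=
  iter k (aci_step A) v0.

Definition is_limit_vector (R : realType) n (u : nat -> 'cV[R]_n) (w : 'cV[R]_n) : Prop :=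
  forall e : R, 0 < e -> forall N : nat, exists k : nat, (N <= k)%N /\ vnorm (u k - w) < e.

(* b0 : the block [-1] is present; b1 : the block [1] is present.       *)
Definition dimA (b0 : bool) (m : nat) (b1 : bool) : nat := (b0 + m.*2 + b1)%N.

(* block index (0 for [-1], j for G_j with 1<=j<=m, m+1 for [1]) of the row/column i *)
Definition blockOf (b0 : bool) (m i : nat) : nat :=
  if b0 && (i == 0)%N then 0%N
  else let i' := (i - b0)%N in if (i' < m.*2)%N then (i'./2).+1 else m.+1.

(* position (false = first, true = second) of i inside its block *)
Definition posOf (b0 : bool) (m i : nat) : bool :=
  if b0 && (i == 0)%N then false
  else let i' := (i - b0)%N in if (i' < m.*2)%N then odd i' else false.

Definition cext (R : numDomainType) (m : nat) (c : nat -> R) (j : nat) : R :=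
  if j == 0%N then -1 else if j == m.+1 then 1 else c j.

Definition Amat (R : numDomainType) (b0 : bool) (m : nat) (b1 : bool) (c s : nat -> R)
  : 'M[R]_(dimA b0 m b1) :=
  \matrix_(i, k)
    if blockOf b0 m i == blockOf b0 m k then
      let j := blockOf b0 m i in
      if posOf b0 m i == posOf b0 m k then cext m c j
      else if ~~ posOf b0 m i then s j else - s j
    else 0.

Definition blk_nz (R : numDomainType) (b0 : bool) (m : nat) (b1 : bool)
  (v : 'cV[R]_(dimA b0 m b1)) (j : nat) : Prop :=
  exists i : 'I_(dimA b0 m b1), blockOf b0 m i = j /\ v i ord0 != 0.

(* Main.v *)
Require Import Defs.
From mathcomp Require Import all_boot all_order all_algebra.
From mathcomp Require Import boolp classical_sets reals.
From mathcomp Require Import functions topology normedtype derive realfun exp.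
From mathcomp Require Import ring lra zify.
Import Order.TTheory GRing.Theory Num.Theory.
Local Open Scope ring_scope.

Module A1.
Import Order.TTheory GRing.Theory Num.Theory.
Local Open Scope ring_scope.
Set Implicit Arguments. Unset Strict Implicit. Unset Printing Implicit Defensive.

Section Abs.
Variable R : realType.
Variable n : nat.
Implicit Types (B : 'M[R]_n) (u : 'cV[R]_n).

Definition sqs (g : 'I_n -> R) u := \sum_i g i * u i ord0 ^+ 2.
Definition dg (g : 'I_n -> R) : 'M[R]_n := diag_mx (\row_i g i).

Lemma quad_diag g u : (u^T *m dg g *m u) ord0 ord0 = sqs g u.
Proof.
rewrite mxE; apply: eq_bigr => k _; rewrite mul_mx_diag !mxE; ring.
Qed.

Lemma dgM g h : dg g *m dg h = dg (fun i => g i * h i).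
Proof.
apply/matrixP=> i j; rewrite mul_mx_diag !mxE.
by case: eqP => [->|_]; rewrite ?mulr1n ?mulr0n ?mul0r.
Qed.

Lemma trmx_dg g : (dg g)^T = dg g.
Proof. by rewrite tr_diag_mx. Qed.

Lemma keyW B (d g : 'I_n -> R) a u :
  B^T *m B = 1%:M -> B + B^T = dg (fun i => 2 * d i) ->
  (forall i k, B i k != 0 -> g i = g k) ->
  sqs g ((B - a%:M) *m u) = sqs (fun i => g i * (1 + a^+2 - 2*a*d i)) u.
Proof.
move=> HO HD Hg.
rewrite -!quad_diag.
have comm : dg g *m B = B *m dg g.
  apply/matrixP=> i k; rewrite mul_mx_diag mul_diag_mx !mxE.
  by have [->|/Hg->] := eqVneq (B i k) 0; rewrite ?mulr0 ?mul0r // mulrC.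
have commT : dg g *m B^T = B^T *m dg g.
  by rewrite -[dg g]trmx_dg -!trmx_mul comm.
have E : (B^T - a%:M) *m (B - a%:M) = dg (fun i => 1 + a^+2 - 2*a*d i).
  rewrite mulmxBl !mulmxBr HO !mul_mx_scalar !mul_scalar_mx.
  apply/matrixP=> i j.
  have := congr1 (fun M : 'M_n => M i j) HD; rewrite !mxE => Hij.
  have -> : a * B i j = a * (B i j + B j i) - a * B j i by ring.
  rewrite Hij.
  case: (eqVneq i j) => [->|nij]; rewrite ?eqxx ?mulr1n ?mulr0n; first ring.
  ring.
have M1 : (B - a%:M)^T = B^T - a%:M by rewrite linearB /= tr_scalar_mx.
have M2 : (B - a%:M)^T *m dg g *m (B - a%:M) = dg (fun i => g i * (1 + a^+2 - 2*a*d i)).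
  rewrite M1 -dgM -E mulmxA; congr (_ *m _).
  by rewrite mulmxBr mulmxBl commT scalar_mxC.
by rewrite trmx_mul -M2 !mulmxA.
Qed.
End Abs.

End A1.
Import A1.

Module A2.
Import Order.TTheory GRing.Theory Num.Theory.
Local Open Scope ring_scope.
Set Implicit Arguments. Unset Strict Implicit. Unset Printing Implicit Defensive.

Section Abs2.
Variable R : realType.
Variable n : nat.
Implicit Types (B : 'M[R]_n) (u : 'cV[R]_n).

Lemma sqs_ext (g h : 'I_n -> R) u : (forall i, g i = h i) -> sqs g u = sqs h u.
Proof. by move=> E; apply: eq_bigr => i _; rewrite E. Qed.

Lemma sqsD (g h : 'I_n -> R) u : sqs (fun i => g i + h i) u = sqs g u + sqs h u.
Proof. by rewrite /sqs -big_split; apply: eq_bigr => i _; rewrite mulrDl. Qed.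

Lemma sqsZ (c : R) (g : 'I_n -> R) u : sqs (fun i => c * g i) u = c * sqs g u.
Proof. by rewrite /sqs mulr_sumr; apply: eq_bigr => i _; rewrite mulrA. Qed.

Lemma sqs_scale (g : 'I_n -> R) (k : R) u : sqs g (k *: u) = k ^+ 2 * sqs g u.
Proof. by rewrite /sqs mulr_sumr; apply: eq_bigr => i _; rewrite mxE; ring. Qed.

Lemma sqs_le (g h : 'I_n -> R) u : (forall i, g i <= h i) -> sqs g u <= sqs h u.
Proof.
move=> E; apply: ler_sum => i _; apply: ler_wpM2r; [exact: sqr_ge0|exact: E].
Qed.

Lemma sqs_ge0 (g : 'I_n -> R) u : (forall i, 0 <= g i) -> 0 <= sqs g u.
Proof. by move=> E; apply: sumr_ge0 => i _; apply: mulr_ge0 => //; exact: sqr_ge0. Qed.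

Lemma vnorm_sq u : vnorm u ^+ 2 = sqs (fun _ => 1) u.
Proof.
rewrite /vnorm sqr_sqrtr; first by apply: eq_bigr => i _; rewrite mul1r.
by apply: sumr_ge0 => i _; exact: sqr_ge0.
Qed.

Lemma qform_tr B u : qform B^T u u = qform B u u.
Proof.
rewrite /qform.
have -> : u^T *m B^T *m u = (u^T *m B *m u)^T by rewrite !trmx_mul trmxK mulmxA.
by rewrite mxE.
Qed.

Lemma qform_d B (d : 'I_n -> R) u : B + B^T = dg (fun i => 2 * d i) ->
  qform B u u = sqs d u.
Proof.
move=> HD.
have : 2 * qform B u u = sqs (fun i => 2 * d i) u.
  rewrite -quad_diag -HD mulmxDr mulmxDl mxE.
  rewrite -/(qform B u u) -/(qform B^T u u) qform_tr; ring.
rewrite sqsZ => /eqP; rewrite -subr_eq0 -mulrBr mulf_eq0 pnatr_eq0 /= subr_eq0.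
by move/eqP.
Qed.

Definition hs B u : 'cV[R]_n :=
  let a := qform B u u in let x := (B - a%:M) *m u in (vnorm x)^-1 *: x.

Lemma aci_stepE (A : 'M[R]_n) v : aci_step A v = hs A^T (hs A v).
Proof. by rewrite /aci_step /hs qform_tr. Qed.

Definition goodB (d : 'I_n -> R) B :=
  [/\ B^T *m B = 1%:M, B + B^T = dg (fun i => 2 * d i) &
      forall i k, B i k != 0 -> d i = d k].

Lemma goodB_tr d B : goodB d B -> goodB d B^T.
Proof.
case=> HO HD Hd; split.
- by rewrite trmxK; apply: mulmx1C.
- by rewrite trmxK addrC.
- by move=> i k; rewrite mxE => /Hd ->.
Qed.

Definition Wc (d : 'I_n -> R) (c : R) u := sqs (fun i => (d i == c)%:R) u.

Lemma Wc_le1 d c u : Wc d c u <= sqs (fun _ => 1) u.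
Proof. by apply: sqs_le => i; case: eqP. Qed.

Lemma Wc_ge0 d c u : 0 <= Wc d c u.
Proof. by apply: sqs_ge0 => i; case: eqP. Qed.

Section Step.
Variables (d : 'I_n -> R) (B : 'M[R]_n) (u : 'cV[R]_n) (x : R).
Hypothesis gB : goodB d B.
Hypothesis u1 : sqs (fun _ => 1) u = 1.
Hypothesis dle1 : forall i, d i ^+ 2 <= 1.
Hypothesis x1 : `|x| < 1.
Hypothesis Wx : 0 < Wc d x u.

Let a := sqs d u.
Let m2 := sqs (fun i => d i ^+ 2) u.

Lemma keyWc c : Wc d c ((B - a%:M) *m u) = (1 + a^+2 - 2*a*c) * Wc d c u.
Proof.
case: gB => HO HD Hd.
rewrite /Wc (keyW (g := fun i => (d i == c)%:R) a u HO HD); last first.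
  by move=> i k /Hd ->.
rewrite -sqsZ; apply: sqs_ext => i; case: eqP => [->|_] /=; rewrite ?mul1r ?mul0r ?mulr0 ?mulr1 //; ring.
Qed.

Lemma key1 : sqs (fun _ => 1) ((B - a%:M) *m u) = 1 - a ^+ 2.
Proof.
case: gB => HO HD Hd.
rewrite (keyW (g := fun _ => 1) a u HO HD) //.
have -> : (fun i => 1 * (1 + a ^+ 2 - 2 * a * d i)) =
  (fun i => (1 + a^+2) * 1 + (- (2 * a)) * d i) by apply/funext => i; ring.
by rewrite sqsD !sqsZ u1 -/a; ring.
Qed.

Lemma keyd : sqs d ((B - a%:M) *m u) = a * (1 + a^+2) - 2 * a * m2.
Proof.
case: gB => HO HD Hd.
rewrite (keyW (g := d) a u HO HD) //.
have -> : (fun i => d i * (1 + a ^+ 2 - 2 * a * d i)) =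
  (fun i => (1 + a^+2) * d i + (- (2 * a)) * d i ^+ 2) by apply/funext => i; ring.
by rewrite sqsD !sqsZ -/a -/m2; ring.
Qed.

Lemma a_lt1 : 0 < 1 - a ^+ 2.
Proof.
rewrite -key1; apply: lt_le_trans (Wc_le1 d x _).
rewrite keyWc; apply: mulr_gt0 => //.
have := x1; rewrite ltr_norml => /andP [h1 h2].
have h3 := sqr_ge0 (a - x).
have h4 : 0 < (1 - x) * (1 + x) by apply: mulr_gt0; lra.
nra.
Qed.

Lemma hsE : hs B u = (vnorm ((B - a%:M) *m u))^-1 *: ((B - a%:M) *m u).
Proof. by case: gB => HO HD Hd; rewrite /hs (qform_d _ HD). Qed.

Lemma hs_sqs g : sqs g (hs B u) = sqs g ((B - a%:M) *m u) / (1 - a ^+ 2).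
Proof.
rewrite hsE sqs_scale exprVn vnorm_sq key1 mulrC //.
Qed.

Lemma hs_u1 : sqs (fun _ => 1) (hs B u) = 1.
Proof. by rewrite hs_sqs key1 divff // gt_eqF // a_lt1. Qed.

Lemma hs_Wc c : Wc d c (hs B u) = (1 + a^+2 - 2*a*c) * Wc d c u / (1 - a ^+ 2).
Proof. by rewrite /Wc hs_sqs -/(Wc d c _) keyWc. Qed.

Lemma hs_a : sqs d (hs B u) = (a * (1 + a^+2) - 2 * a * m2) / (1 - a ^+ 2).
Proof. by rewrite hs_sqs keyd. Qed.

Lemma m2_ge : a ^+ 2 <= m2.
Proof.
have : 0 <= sqs (fun i => (d i - a) ^+ 2) u by apply: sqs_ge0 => i; exact: sqr_ge0.
have -> : (fun i => (d i - a) ^+ 2) = (fun i => d i ^+ 2 + ((- (2 * a)) * d i + a ^+ 2 * 1)).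
  by apply/funext => i; ring.
by rewrite !sqsD !sqsZ u1 -/a -/m2 => h; lra.
Qed.

Lemma m2_le : m2 <= 1.
Proof. by rewrite -u1; apply: sqs_le. Qed.

Lemma hs_abs : `|sqs d (hs B u)| <= `|a|.
Proof.
have h0 := a_lt1; have h1 := m2_ge; have h2 := m2_le.
have -> : sqs d (hs B u) = a * ((1 + a^+2 - 2 * m2) / (1 - a ^+ 2)).
  by rewrite hs_a; field; rewrite gt_eqF.
rewrite normrM; apply: ler_piMr => //.
rewrite normrM normfV (gtr0_norm h0) ler_pdivrMr // mul1r.
rewrite ler_norml; apply/andP; split; lra.
Qed.

End Step.
End Abs2.

End A2.
Import A2.

Module A3.
Import Order.TTheory GRing.Theory Num.Theory.
Import numFieldNormedType.Exports.
Local Open Scope classical_set_scope.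
Local Open Scope ring_scope.
Set Implicit Arguments. Unset Strict Implicit. Unset Printing Implicit Defensive.

Section Calc.
Variable R : realType.
Variables s t : R.

Definition Gf (b : R) : R :=
  t * ln (1 + 2 * b * s + b ^+ 2) + s * ln (1 - 2 * b * t + b ^+ 2) - (s + t) * ln (1 - b ^+ 2).

Definition P1 : {poly R} := 'X^2 + (2 * s)%:P * 'X + 1.
Definition P2 : {poly R} := 'X^2 - (2 * t)%:P * 'X + 1.
Definition P3 : {poly R} := 1 - 'X^2.

Lemma P1E b : P1.[b] = 1 + 2 * b * s + b ^+ 2.
Proof. rewrite /P1 !hornerE; ring. Qed.
Lemma P2E b : P2.[b] = 1 - 2 * b * t + b ^+ 2.
Proof. rewrite /P2 !hornerE; ring. Qed.
Lemma P3E b : P3.[b] = 1 - b ^+ 2.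
Proof. rewrite /P3 !hornerE; ring. Qed.
Lemma dP1E b : (deriv P1).[b] = 2 * s + 2 * b.
Proof. rewrite /P1 !(derivD, derivB, derivN, derivXn, derivM, derivC, derivX) !hornerE /=; ring. Qed.
Lemma dP2E b : (deriv P2).[b] = 2 * b - 2 * t.
Proof. rewrite /P2 !(derivD, derivB, derivN, derivXn, derivM, derivC, derivX) !hornerE /=; ring. Qed.
Lemma dP3E b : (deriv P3).[b] = - (2 * b).
Proof. rewrite /P3 !(derivD, derivB, derivN, derivXn, derivM, derivC, derivX) !hornerE /=; ring. Qed.

Lemma lnP_derive (P : {poly R}) (x : R) : 0 < P.[x] ->
  is_derive x (1:R) (@ln R \o horner P) ((P.[x])^-1 * (deriv P).[x]).
Proof.
move=> hP; apply: is_derive1_comp.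
exact: is_derive1_ln.
Qed.

Definition Gd (x : R) : R :=
  t * ((1 + 2 * x * s + x ^+ 2)^-1 * (2 * s + 2 * x)) +
  s * ((1 - 2 * x * t + x ^+ 2)^-1 * (2 * x - 2 * t)) -
  (s + t) * ((1 - x ^+ 2)^-1 * (- (2 * x))).

Lemma Gf_derive (x : R) : 0 < 1 + 2 * x * s + x ^+ 2 -> 0 < 1 - 2 * x * t + x ^+ 2 ->
  0 < 1 - x ^+ 2 -> is_derive x (1:R) Gf (Gd x).
Proof.
move=> h1 h2 h3.
have d1 := @lnP_derive P1 x; rewrite P1E dP1E in d1; have {}d1 := d1 h1.
have d2 := @lnP_derive P2 x; rewrite P2E dP2E in d2; have {}d2 := d2 h2.
have d3 := @lnP_derive P3 x; rewrite P3E dP3E in d3; have {}d3 := d3 h3.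
have E : Gf = t *: (@ln R \o horner P1) + s *: (@ln R \o horner P2) - (s + t) *: (@ln R \o horner P3).
  apply/funext => b; by rewrite /Gf !fctE /= P1E P2E P3E.
rewrite E /Gd.
have := is_deriveB (is_deriveD (is_deriveZ t d1) (is_deriveZ s d2)) (is_deriveZ (s + t) d3).
done.
Qed.

Hypotheses (s0 : 0 <= s) (t0 : 0 <= t) (s1 : s <= 1) (t1 : t <= 1)
  (st0 : 0 < s + t) (st1 : s * t < 1).

Lemma D1_pos (x : R) : 0 <= x -> 0 < 1 + 2 * x * s + x ^+ 2.
Proof. move=> hx; have := mulr_ge0 hx s0; nra. Qed.

Lemma D2_pos (x : R) : 0 <= x < 1 -> 0 < 1 - 2 * x * t + x ^+ 2.
Proof.
case/andP=> hx hx1.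
have : x * t <= x by rewrite ler_piMr.
have : 0 < (1 - x) ^+ 2 by rewrite exprn_gt0 // subr_gt0.
nra.
Qed.

Lemma D3_pos (x : R) : 0 <= x < 1 -> 0 < 1 - x ^+ 2.
Proof. case/andP=> hx hx1; nra. Qed.

Lemma Gd_pos (x : R) : 0 < x < 1 -> 0 < Gd x.
Proof.
case/andP=> hx hx1.
have h1 := D1_pos (ltW hx).
have h2 : 0 < 1 - 2 * x * t + x ^+ 2 by apply: D2_pos; rewrite ltW.
have h3 : 0 < 1 - x ^+ 2 by apply: D3_pos; rewrite ltW.
have -> : Gd x = 4 * x * (s + t) * ((1 - x) ^+ 2 * (1 - s * t) + 2 * x * (1 + s) * (1 - t)) /
   ((1 + 2 * x * s + x ^+ 2) * (1 - 2 * x * t + x ^+ 2) * (1 - x ^+ 2)).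
  by rewrite /Gd; field; rewrite !gt_eqF.
apply: divr_gt0; last by rewrite !mulr_gt0.
apply: mulr_gt0; first by rewrite !mulr_gt0.
apply: ltr_pwDl.
  by apply: mulr_gt0; [rewrite exprn_gt0 // subr_gt0|rewrite subr_gt0].
apply: mulr_ge0; last by rewrite subr_ge0.
by apply: mulr_ge0; [rewrite mulr_ge0 // ltW|apply: addr_ge0].
Qed.

Lemma Gf0 : Gf 0 = 0.
Proof. rewrite /Gf expr0n /= !(mulr0, mul0r, addr0, subr0) ln1; ring. Qed.

Lemma Gf_cont (a b : R) : 0 <= a -> b < 1 -> {within `[a, b], continuous Gf}.
Proof.
move=> ha hb; apply: derivable_within_continuous => x.
rewrite in_itv /= => /andP [h1 h2].
have hx : 0 <= x by apply: le_trans h1.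
have hx1 : x < 1 by apply: le_lt_trans hb.
have := Gf_derive (D1_pos hx) (D2_pos (introT andP (conj hx hx1))) (D3_pos (introT andP (conj hx hx1))).
by case.
Qed.

Lemma Gf_mono (L b : R) : 0 < L -> L <= b -> b < 1 -> 0 < Gf L <= Gf b.
Proof.
move=> hL hLb hb.
have hL1 : L < 1 by apply: le_lt_trans hb.
have der (x : R) : x \in `]0, 1[%R -> is_derive x (1:R) Gf (Gd x).
  rewrite in_itv /= => /andP [h1 h2].
  by apply: Gf_derive; [apply: D1_pos; rewrite ltW|apply: D2_pos; rewrite ltW ?h2|apply: D3_pos; rewrite ltW ?h2].
have derI (a c : R) : 0 <= a -> c <= 1 -> forall x, x \in `]a, c[%R -> is_derive x (1:R) Gf (Gd x).
  move=> ha hc x; rewrite in_itv /= => /andP [h1 h2]; apply: der.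
  by rewrite in_itv /= (le_lt_trans ha h1) (lt_le_trans h2 hc).
have pos1 : 0 < Gf L.
  have [c hc E] := MVT hL (derI 0 L (lexx 0) (ltW hL1)) (Gf_cont (lexx 0) hL1).
  move: E; rewrite Gf0 subr0 subr0 => ->.
  apply: mulr_gt0 => //; apply: Gd_pos.
  move: hc; rewrite in_itv /= => /andP [h1 h2]; rewrite h1 /=.
  by apply: lt_trans hL1.
rewrite pos1 /=.
case: (eqVneq L b) => [<-//|nLb].
have lLb : L < b by rewrite lt_neqAle nLb.
have [c hc E] := MVT lLb (derI L b (ltW hL) (ltW hb)) (Gf_cont (ltW hL) hb).
rewrite -subr_ge0 E; apply: mulr_ge0; last by rewrite subr_ge0 ltW.
apply: ltW; apply: Gd_pos.
move: hc; rewrite in_itv /= => /andP [h1 h2].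
by rewrite (lt_trans hL h1) (lt_trans h2 hb).
Qed.

End Calc.

End A3.
Import A3.

Module A4.
Import Order.TTheory GRing.Theory Num.Theory.
Import numFieldNormedType.Exports.
Local Open Scope ring_scope.
Set Implicit Arguments. Unset Strict Implicit. Unset Printing Implicit Defensive.

Section Dyn.
Variable R : realType.
Variable n : nat.
Variables (d : 'I_n -> R) (Bs : nat -> 'M[R]_n) (u : nat -> 'cV[R]_n) (z : R).
Hypothesis gBs : forall t, goodB d (Bs t).
Hypothesis urec : forall t, u t.+1 = hs (Bs t) (u t).
Hypothesis u0 : sqs (fun _ => 1) (u 0) = 1.
Hypothesis dle1 : forall i, d i ^+ 2 <= 1.
Hypothesis z1 : `|z| < 1.
Hypothesis Wz0 : 0 < Wc d z (u 0).

Definition aa t := sqs d (u t).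

Lemma fz_pos (a : R) : 0 < 1 + a ^+ 2 - 2 * a * z.
Proof.
have := z1; rewrite ltr_norml => /andP [h1 h2].
have h3 := sqr_ge0 (a - z).
have h4 : 0 < (1 - z) * (1 + z) by apply: mulr_gt0; lra.
nra.
Qed.

Lemma inv_seq t : sqs (fun _ => 1) (u t) = 1 /\ 0 < Wc d z (u t).
Proof.
elim: t => [|t IH]; first by split.
case: IH => h1 h2.
rewrite urec; split; first exact: (hs_u1 (gBs t) h1 z1 h2).
rewrite (hs_Wc (gBs t) h1).
apply: divr_gt0; last exact: (a_lt1 (gBs t) h1 z1 h2).
by apply: mulr_gt0 => //; apply: fz_pos.
Qed.

Lemma aa_lt1 t : 0 < 1 - aa t ^+ 2.
Proof. by have [h1 h2] := inv_seq t; exact: (a_lt1 (gBs t) h1 z1 h2). Qed.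

Lemma aa_mono t : `|aa t.+1| <= `|aa t|.
Proof.
have [h1 h2] := inv_seq t; rewrite /aa urec.
exact: (hs_abs (gBs t) h1 dle1 z1 h2).
Qed.

Lemma aa_mono_le t t' : (t <= t')%N -> `|aa t'| <= `|aa t|.
Proof.
move=> /subnK <-; elim: (t' - t)%N => [|k IH]; first by rewrite add0n.
by rewrite addSn; apply: le_trans (aa_mono _) IH.
Qed.

Lemma Wc_rec c t : Wc d c (u t.+1) =
  (1 + aa t ^+ 2 - 2 * aa t * c) / (1 - aa t ^+ 2) * Wc d c (u t).
Proof.
have [h1 h2] := inv_seq t; rewrite urec (hs_Wc (gBs t) h1) /aa.
by rewrite mulrAC.
Qed.

Lemma fc_pos (a c : R) : `|c| <= 1 -> 0 < 1 - a ^+ 2 -> 0 < 1 + a ^+ 2 - 2 * a * c.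
Proof.
move=> hc ha.
have := hc; rewrite ler_norml => /andP [c1 c2].
have a1 : a < 1 by nra.
have a2 : -1 < a by nra.
case: (lerP 0 a) => a0.
  have : 0 < (1 - a) ^+ 2 by rewrite exprn_gt0 // subr_gt0.
  have : 0 <= a * (1 - c) by apply: mulr_ge0; lra.
  nra.
have : 0 < (1 + a) ^+ 2 by rewrite exprn_gt0 //; lra.
have : 0 <= (- a) * (1 + c) by apply: mulr_ge0; lra.
nra.
Qed.

Lemma Wc_pos c t : `|c| <= 1 -> 0 < Wc d c (u 0) -> 0 < Wc d c (u t).
Proof.
move=> hc h0; elim: t => [|t IH] //; rewrite Wc_rec.
apply: mulr_gt0 => //; apply: divr_gt0; last exact: aa_lt1.
exact: fc_pos (aa_lt1 t).
Qed.

Section Pot.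
Variables (x y lam mu L delta : R).
Hypotheses (hx : `|x| <= 1) (hy : `|y| <= 1) (Wx0 : 0 < Wc d x (u 0)) (Wy0 : 0 < Wc d y (u 0)).
Hypotheses (lam0 : 0 <= lam) (mu0 : 0 <= mu) (dpos : 0 < delta).
Hypothesis Hinc : forall a : R, L <= `|a| -> 0 < 1 - a ^+ 2 ->
  delta <= lam * ln ((1 + a ^+ 2 - 2 * a * x) / (1 - a ^+ 2)) +
           mu * ln ((1 + a ^+ 2 - 2 * a * y) / (1 - a ^+ 2)).

Definition Phi t := lam * ln (Wc d x (u t)) + mu * ln (Wc d y (u t)).

Lemma ln_rec c t : `|c| <= 1 -> 0 < Wc d c (u 0) ->
  ln (Wc d c (u t.+1)) = ln ((1 + aa t ^+ 2 - 2 * aa t * c) / (1 - aa t ^+ 2)) + ln (Wc d c (u t)).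
Proof.
move=> hc h0; rewrite Wc_rec lnM //; rewrite posrE.
  by apply: divr_gt0; [exact: fc_pos (aa_lt1 t)|exact: aa_lt1].
exact: Wc_pos.
Qed.

Lemma Phi_le0 t : Phi t <= 0.
Proof.
have [h1 _] := inv_seq t.
have l1 : ln (Wc d x (u t)) <= 0 by apply: ln_le0; rewrite -h1 Wc_le1.
have l2 : ln (Wc d y (u t)) <= 0 by apply: ln_le0; rewrite -h1 Wc_le1.
have := mulr_ge0_le0 lam0 l1; have := mulr_ge0_le0 mu0 l2; rewrite /Phi; lra.
Qed.

Lemma no_stay : ~ (forall t, L <= `|aa t|).
Proof.
move=> HL.
have step t : Phi t + delta <= Phi t.+1.
  rewrite /Phi (ln_rec t hx Wx0) (ln_rec t hy Wy0).
  have := Hinc (HL t) (aa_lt1 t); lra.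
have grow t : Phi 0 + t%:R * delta <= Phi t.
  elim: t => [|t IH]; first by rewrite mul0r addr0.
  apply: le_trans (step t); rewrite -nat1r mulrDl mul1r; lra.
set t := (Num.Def.trunc (- Phi 0 / delta)).+1.
have := truncnS_gt (- Phi 0 / delta); rewrite ltr_pdivrMr // => h.
have := grow t; have := Phi_le0 t; rewrite -/t in h; lra.
Qed.
End Pot.

End Dyn.

Section Incr.
Variable R : realType.

Lemma ln_f (a c : R) : 0 < 1 - a ^+ 2 -> 0 < 1 + a ^+ 2 - 2 * a * c ->
  ln ((1 + a ^+ 2 - 2 * a * c) / (1 - a ^+ 2)) = ln (1 + a ^+ 2 - 2 * a * c) - ln (1 - a ^+ 2).
Proof.
move=> h1 h2; rewrite lnM ?posrE ?invr_gt0 // lnV ?posrE //.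
Qed.

Lemma incr (x y L : R) : -1 <= x -> x <= 0 -> 0 <= y -> y <= 1 -> -1 < x * y -> 0 < L ->
  exists lam mu delta : R, [/\ 0 <= lam, 0 <= mu, 0 < delta &
    forall a : R, L <= `|a| -> 0 < 1 - a ^+ 2 ->
    delta <= lam * ln ((1 + a ^+ 2 - 2 * a * x) / (1 - a ^+ 2)) +
             mu * ln ((1 + a ^+ 2 - 2 * a * y) / (1 - a ^+ 2))].
Proof.
move=> x1 x0 y0 y1 xy hL.
have fpos (a c : R) : -1 <= c <= 1 -> 0 < 1 - a ^+ 2 -> 0 < 1 + a ^+ 2 - 2 * a * c.
  case/andP=> c1 c2 ha.
  have a1 : a < 1 by nra.
  have a2 : -1 < a by nra.
  case: (lerP 0 a) => a0.
    have : 0 < (1 - a) ^+ 2 by rewrite exprn_gt0 // subr_gt0.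
    have : 0 <= a * (1 - c) by apply: mulr_ge0; lra.
    nra.
  have : 0 < (1 + a) ^+ 2 by rewrite exprn_gt0 //; lra.
  have : 0 <= (- a) * (1 + c) by apply: mulr_ge0; lra.
  nra.
have b1 (a : R) : 0 < 1 - a ^+ 2 -> `|a| < 1.
  move=> ha; rewrite ltr_norml; apply/andP; split; nra.
have nK (a : R) : `|a| ^+ 2 = a ^+ 2 by rewrite real_normK ?num_real.
case: (lerP 1 L) => L1.
  exists 1, 0, 1; split => // a ha ha1.
  by have := b1 _ ha1; rewrite ltNge (le_trans L1 ha).
have fx : -1 <= x <= 1 by apply/andP; split => //; lra.
have fy : -1 <= y <= 1 by apply/andP; split => //; lra.
case: (eqVneq x 0) => [xz|xnz].
  have hm := @Gf_mono R 0 1 (lexx 0) (lexx 1) ltac:(by rewrite add0r) ltac:(by rewrite mul0r).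
  exists 1, 0, (Gf 0 1 L); split => //.
    by case/andP: (hm L L hL (lexx L) L1).
  move=> a ha ha1.
  case/andP: (hm L `|a| hL ha (b1 _ ha1)) => _.
  rewrite !ln_f ?fpos // xz /Gf nK.
  have -> : 1 + a ^+ 2 - 2 * a * 0 = 1 + 2 * `|a| * 0 + a ^+ 2 by ring.
  lra.
have xn : x < 0 by rewrite lt_neqAle xnz.
set s := - x; set t := y.
have s0 : 0 <= s by rewrite /s; lra.
have t0 : 0 <= t by [].
have s1 : s <= 1 by rewrite /s; lra.
have st0 : 0 < s + t by rewrite /s /t; lra.
have st1 : s * t < 1 by rewrite /s /t; lra.
have ts1 : t * s < 1 by rewrite mulrC.
have ts0 : 0 < t + s by rewrite addrC.
have hm1 := @Gf_mono R s t s0 y1 st0 st1.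
have hm2 := @Gf_mono R t s t0 s1 ts0 ts1.
exists t, s, (Num.min (Gf s t L) (Gf t s L)); split => //.
  rewrite lt_min; case/andP: (hm1 L L hL (lexx L) L1) => -> _.
  by case/andP: (hm2 L L hL (lexx L) L1).
move=> a ha ha1.
rewrite !ln_f ?fpos //.
case: (lerP 0 a) => a0.
  case/andP: (hm1 L `|a| hL ha (b1 _ ha1)) => _.
  rewrite ge_min /Gf (ger0_norm a0).
  have -> : 1 + a ^+ 2 - 2 * a * x = 1 + 2 * a * s + a ^+ 2 by rewrite /s; ring.
  have -> : 1 + a ^+ 2 - 2 * a * y = 1 - 2 * a * t + a ^+ 2 by rewrite /t; ring.
  move=> h; apply/orP; left; lra.
case/andP: (hm2 L `|a| hL ha (b1 _ ha1)) => _.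
rewrite ge_min /Gf (ltr0_norm a0).
have -> : 1 + a ^+ 2 - 2 * a * x = 1 - 2 * - a * s + (- a) ^+ 2 by rewrite /s; ring.
have -> : 1 + a ^+ 2 - 2 * a * y = 1 + 2 * - a * t + (- a) ^+ 2 by rewrite /t; ring.
have -> : 1 - a ^+ 2 = 1 - (- a) ^+ 2 by ring.
move=> h; apply/orP; right; lra.
Qed.
End Incr.

Lemma dyn_main (R : realType) (n : nat) (d : 'I_n -> R) (Bs : nat -> 'M[R]_n)
  (u : nat -> 'cV[R]_n) (z : R) :
  (forall t, goodB d (Bs t)) -> (forall t, u t.+1 = hs (Bs t) (u t)) ->
  sqs (fun _ => 1) (u 0) = 1 -> (forall i, d i ^+ 2 <= 1) -> `|z| < 1 ->
  0 < Wc d z (u 0) ->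
  forall x y L : R, -1 <= x -> x <= 0 -> 0 <= y -> y <= 1 -> -1 < x * y ->
  0 < Wc d x (u 0) -> 0 < Wc d y (u 0) -> 0 < L ->
  exists t, `|aa d u t| < L.
Proof.
move=> gBs urec u0 dle1 z1 Wz0 x y L x1 x0 y0 y1 xy Wx0 Wy0 hL.
have [lam [mu [delta [l0 m0 d0 H]]]] := incr x1 x0 y0 y1 xy hL.
case: (pselect (exists t, `|aa d u t| < L)) => // H'.
exfalso.
have hx : `|x| <= 1 by rewrite ler_norml; apply/andP; split => //; lra.
have hy : `|y| <= 1 by rewrite ler_norml; apply/andP; split => //; lra.
apply: (no_stay gBs urec u0 z1 Wz0 hx hy Wx0 Wy0 l0 m0 d0 H) => t.
rewrite leNgt; apply/negP => h; apply: H'; by exists t.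
Qed.

End A4.
Import A4.

Module A5.
Set Implicit Arguments. Unset Strict Implicit. Unset Printing Implicit Defensive.

Section Idx.
Variables (b0 b1 : bool) (m : nat).

Lemma half_lt (k : nat) : (k < m.*2)%N -> (k./2 < m)%N.
Proof. by rewrite ltn_half_double. Qed.

Lemma blk_cases (i : nat) : (i < dimA b0 m b1)%N ->
 [\/ [/\ b0, i = 0%N, blockOf b0 m i = 0%N & posOf b0 m i = false],
     [/\ (b0 <= i)%N, (i - b0 < m.*2)%N, blockOf b0 m i = ((i - b0)./2).+1 & posOf b0 m i = odd (i - b0)] |
     [/\ i = (b0 + m.*2)%N, b1, blockOf b0 m i = m.+1 & posOf b0 m i = false]].
Proof.
rewrite /dimA /blockOf /posOf => hi.
case: b0 hi => /= hi.
  case: eqP => [->|/eqP i0]; first by constructor 1.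
  case: ltnP => h.
    by constructor 2; split => //; lia.
  constructor 3; split => //; first lia.
  by case: b1 hi => //=; lia.
rewrite subn0; case: ltnP => h.
  by constructor 2; split => //; rewrite subn0.
constructor 3; split => //; first lia.
by case: b1 hi => //=; lia.
Qed.

Lemma blk_inj (i k : nat) : (i < dimA b0 m b1)%N -> (k < dimA b0 m b1)%N ->
  blockOf b0 m i = blockOf b0 m k -> posOf b0 m i = posOf b0 m k -> i = k.
Proof.
move=> hi hk.
case: (blk_cases hi) => -[hi1 hi2 -> ->];
case: (blk_cases hk) => -[hk1 hk2 -> ->] //; try lia.
Qed.

Definition partner (i : nat) : nat := if posOf b0 m i then i.-1 else i.+1.

Lemma partner_spec (i : nat) : (i < dimA b0 m b1)%N ->
  (1 <= blockOf b0 m i <= m)%N ->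
  [/\ (partner i < dimA b0 m b1)%N, blockOf b0 m (partner i) = blockOf b0 m i &
      posOf b0 m (partner i) = ~~ posOf b0 m i].
Proof.
move=> hi hb; rewrite /partner.
case: (blk_cases hi) => -[hi1 hi2 hb' hp]; rewrite hb' in hb *; rewrite hp; try lia.
have E := odd_double_half (i - b0).
case: (boolP (odd (i - b0))) E => ho E.
- have hp1 : (i.-1 < dimA b0 m b1)%N by lia.
  case: (blk_cases hp1) => -[h1 h2 -> ->]; try lia.
  have hd : (i.-1 - b0 = ((i - b0)./2).*2)%N by lia.
  by rewrite hd odd_double doubleK.
- have hp1 : (i.+1 < dimA b0 m b1)%N.
    move: E hb; rewrite /dimA /=; lia.
  case: (blk_cases hp1) => -[h1 h2 -> ->]; try lia.
  have hd : (i.+1 - b0 = 1 + ((i - b0)./2).*2)%N by lia.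
  by rewrite hd -[1%N]/(nat_of_bool true) half_bit_double oddD odd_double.
Qed.

Lemma pos_nonrot (i : nat) : (i < dimA b0 m b1)%N -> ~~ (1 <= blockOf b0 m i <= m)%N ->
  posOf b0 m i = false.
Proof.
move=> hi; case: (blk_cases hi) => -[h1 h2 hb hp] //; rewrite hb.
have := half_lt h2; lia.
Qed.

Lemma blk_le (i : nat) : (i < dimA b0 m b1)%N -> (blockOf b0 m i <= m.+1)%N.
Proof.
move=> hi; case: (blk_cases hi) => -[h1 h2 hb hp] //; rewrite hb //.
have := half_lt h2; lia.
Qed.

Lemma blk_two (i j : nat) : (i < dimA b0 m b1)%N -> (j < dimA b0 m b1)%N ->
  blockOf b0 m j = blockOf b0 m i ->
  j = i \/ ((1 <= blockOf b0 m i <= m)%N /\ j = partner i).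
Proof.
move=> hi hj hb.
case: (eqVneq (posOf b0 m j) (posOf b0 m i)) => hp.
  by left; apply: blk_inj.
case: (boolP (1 <= blockOf b0 m i <= m)%N) => hr.
  right; split => //.
  case: (partner_spec hi hr) => h1 h2 h3.
  apply: blk_inj => //; first by rewrite h2.
  by rewrite h3; move: hp; case: (posOf b0 m j); case: (posOf b0 m i).
exfalso; move: hp; rewrite (pos_nonrot hi hr) pos_nonrot //.
  by rewrite hb.
Qed.

End Idx.

End A5.
Import A5.

Module A6.
Import Order.TTheory GRing.Theory Num.Theory.
Local Open Scope ring_scope.
Set Implicit Arguments. Unset Strict Implicit. Unset Printing Implicit Defensive.

Section AmatProps.
Variable R : realType.
Variables (b0 b1 : bool) (m : nat) (c s : nat -> R).
Hypothesis hcs : forall j, (1 <= j <= m)%N -> c j ^+ 2 + s j ^+ 2 = 1.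
Hypothesis hmono : forall j, (j <= m)%N -> cext m c j < cext m c j.+1.

Local Notation N := (dimA b0 m b1).
Local Notation A := (Amat b0 m b1 c s).
Local Notation blk := (blockOf b0 m).
Local Notation pos := (posOf b0 m).

Definition dA (i : 'I_N) : R := cext m c (blk i).

Lemma cext_le j k : (j <= k <= m.+1)%N -> cext m c j <= cext m c k.
Proof.
case/andP=> /subnK <-; elim: (k - j)%N => [|l IH] h; first by rewrite add0n.
apply: le_trans (IH _) (ltW (hmono _)); lia.
Qed.

Lemma cext_lt j k : (j < k <= m.+1)%N -> cext m c j < cext m c k.
Proof.
case/andP=> h1 h2; apply: lt_le_trans (hmono _) (cext_le _); lia.
Qed.

Lemma cext_bnd j : (j <= m.+1)%N -> -1 <= cext m c j <= 1.
Proof.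
move=> hj; have h0 : cext m c 0 = -1 by [].
have h1 : cext m c m.+1 = 1 by rewrite /cext /= eqxx.
rewrite -h0 -h1 !cext_le //; lia.
Qed.

Lemma cext_rot j : (1 <= j <= m)%N -> -1 < cext m c j < 1 /\ cext m c j = c j.
Proof.
move=> hj; have h0 : cext m c 0 = -1 by [].
have h1 : cext m c m.+1 = 1 by rewrite /cext /= eqxx.
split; first by rewrite -h0 -h1 !cext_lt //; lia.
rewrite /cext; case: eqP; first lia.
by case: eqP; first lia.
Qed.

Lemma dA_sq i : dA i ^+ 2 <= 1.
Proof.
have /andP [h1 h2] := cext_bnd (blk_le (ltn_ord i)); rewrite /dA; nra.
Qed.

Lemma Aentry (i k : 'I_N) : A i k =
  if blk i == blk k then
      if pos i == pos k then cext m c (blk i)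
      else if ~~ pos i then s (blk i) else - s (blk i)
  else 0.
Proof. by rewrite mxE. Qed.

Lemma A_blk (i k : 'I_N) : A i k != 0 -> blk i = blk k.
Proof. by rewrite Aentry; case: (eqVneq (blk i) (blk k)) => // _; rewrite eqxx. Qed.

Lemma A_Hd (i k : 'I_N) : A i k != 0 -> dA i = dA k.
Proof. by move/A_blk; rewrite /dA => ->. Qed.

Lemma A_HD : A + A^T = dg (fun i => 2 * dA i).
Proof.
apply/matrixP => i k.
have -> : (A + A^T) i k = A i k + A k i by rewrite [LHS]mxE [X in _ + X]mxE.
rewrite [RHS]mxE [(\row__ _) _ _]mxE !Aentry.
case: (eqVneq i k) => [->|nik]; first by rewrite !eqxx /dA mulr1n; ring.
rewrite mulr0n.
case: (eqVneq (blk i) (blk k)) => hb; last by rewrite addr0.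
case: (eqVneq (pos i) (pos k)) => hp.
  by move: nik; rewrite (val_inj (blk_inj (ltn_ord i) (ltn_ord k) hb hp)) eqxx.
rewrite hb.
by move: hp; case: (pos i); case: (pos k) => //= _; ring.
Qed.

Lemma Aii (i : 'I_N) : A i i = cext m c (blk i).
Proof. by rewrite Aentry !eqxx. Qed.

Lemma Aip (i p : 'I_N) : blk p = blk i -> pos p = ~~ pos i ->
  A i p = (if ~~ pos i then s (blk i) else - s (blk i)).
Proof.
move=> hb hp; rewrite Aentry hb eqxx hp.
by case: (pos i).
Qed.

Lemma Ablk0 (i k : 'I_N) : blk i != blk k -> A i k = 0.
Proof. by rewrite Aentry => /negbTE ->. Qed.

Lemma A_HO : A^T *m A = 1%:M.
Proof.
apply/matrixP => i k; rewrite mxE [RHS]mxE.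
under eq_bigr => j _ do rewrite mxE.
case: (eqVneq (blk i) (blk k)) => hik; last first.
  rewrite big1; last first.
    move=> j _; case: (eqVneq (blk j) (blk i)) => hj.
      by rewrite (@Ablk0 j k) ?mulr0 // hj.
    by rewrite (Ablk0 hj) mul0r.
  by case: eqP => // eik; move: hik; rewrite eik eqxx.
rewrite (bigD1 i) //=.
have blk_j (j : 'I_N) : blk j = blk i -> j = i \/ ((1 <= blk i <= m)%N /\ val j = partner b0 m (val i)).
  move=> hj; case: (blk_two (ltn_ord i) (ltn_ord j) hj) => [h|h]; [left; exact: val_inj|by right].
case: (boolP (1 <= blk i <= m)%N) => hr; last first.
  rewrite big1 ?addr0; last first.
    move=> j hj; case: (eqVneq (blk j) (blk i)) => hbj.
      by case: (blk_j j hbj) => [h|[h _]]; [move: hj; rewrite h eqxx|move: hr; rewrite h].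
    by rewrite (Ablk0 hbj) mul0r.
  case: (blk_j k (esym hik)) => [->|[h _]]; last by move: hr; rewrite h.
  rewrite eqxx mulr1n Aii.
  have := blk_le (ltn_ord i); rewrite leq_eqVlt ltnS => /orP [/eqP ->|hl].
    by rewrite /cext /= eqxx mulr1.
  have -> : blk i = 0%N by move: hr hl; lia.
  by rewrite /cext /=; ring.
have [hp1 hp2 hp3] := partner_spec (ltn_ord i) hr.
set p : 'I_N := Ordinal hp1.
have hpi : p != i.
  apply/eqP => /(congr1 val) /= h; move: hp3; rewrite h.
  by case: (pos i).
rewrite (bigD1 p) //=.
rewrite big1 ?addr0; last first.
  move=> j /andP [hji hjp]; case: (eqVneq (blk j) (blk i)) => hbj.
    case: (blk_j j hbj) => [h|[_ h]]; first by move: hji; rewrite h eqxx.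
    by move: hjp; rewrite (_ : j = p) ?eqxx //; apply: val_inj; exact: h.
  by rewrite (Ablk0 hbj) mul0r.
have [/andP [cl cu] cE] := cext_rot hr.
have Hpi : A p i = (if ~~ pos p then s (blk p) else - s (blk p)).
  by apply: Aip => //; rewrite hp3; case: (pos i).
rewrite !Hpi !Aii hp2 hp3 cE.
case: (blk_j k (esym hik)) => [->|[_ h]].
  rewrite eqxx mulr1n !Aii !Hpi hp2 hp3 cE negbK.
  by have := hcs hr; case: (pos i) => /= <-; ring.
have -> : k = p by apply: val_inj.
rewrite eq_sym (negbTE hpi) mulr0n.
have -> : A i p = (if ~~ pos i then s (blk i) else - s (blk i)) by apply: Aip.
rewrite !Aii hp2 cE negbK.
by case: (pos i) => /=; ring.
Qed.

End AmatProps.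

End A6.
Import A6.

Module A7.
Import Order.TTheory GRing.Theory Num.Theory.
Local Open Scope ring_scope.
Set Implicit Arguments. Unset Strict Implicit. Unset Printing Implicit Defensive.

Section Fin.
Variable R : realType.
Variable n : nat.
Implicit Types (x y : 'cV[R]_n).

Lemma vnorm_ge0 x : 0 <= vnorm x.
Proof. exact: sqrtr_ge0. Qed.

Lemma coord_le x i : `|x i ord0| <= vnorm x.
Proof.
rewrite /vnorm -sqrtr_sqr ler_sqrt; last by apply: sumr_ge0 => j _; exact: sqr_ge0.
rewrite (bigD1 i) //= lerDl; apply: sumr_ge0 => j _; exact: sqr_ge0.
Qed.

Lemma vnorm1 x : sqs (fun _ => 1) x = 1 -> vnorm x = 1.
Proof.
move=> h; rewrite /vnorm (_ : \sum_i _ = 1) ?sqrtr1 // -h.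
by apply: eq_bigr => i _; rewrite mul1r.
Qed.

Lemma sqs_close (g : 'I_n -> R) x y (e : R) : (forall i, `|g i| <= 1) ->
  sqs (fun _ => 1) x = 1 -> vnorm (x - y) < e -> e <= 1 ->
  `|sqs g x - sqs g y| <= 3 * n%:R * e.
Proof.
move=> hg hx hxy he.
have hx1 : vnorm x = 1 by apply: vnorm1.
rewrite /sqs -sumrB.
apply: le_trans (ler_norm_sum _ _ _) _.
have -> : 3 * n%:R * e = \sum_(i < n) (3 * e).
  by rewrite sumr_const card_ord -mulr_natl; ring.
apply: ler_sum => i _.
have h1 : `|x i ord0| <= 1 by rewrite -hx1 coord_le.
have h2 : `|x i ord0 - y i ord0| <= e.
  apply: ltW; apply: le_lt_trans hxy; have := coord_le (x - y) i; rewrite !mxE.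
  done.
have h3 : `|y i ord0| <= 2.
  have : `|y i ord0| <= `|x i ord0| + `|x i ord0 - y i ord0|.
    rewrite {1}(_ : y i ord0 = x i ord0 - (x i ord0 - y i ord0)); last by ring.
    exact: ler_normB.
  lra.
rewrite -mulrBr normrM.
have -> : x i ord0 ^+ 2 - y i ord0 ^+ 2 = (x i ord0 - y i ord0) * (x i ord0 + y i ord0) by ring.
rewrite normrM.
have h4 : `|x i ord0 + y i ord0| <= 3.
  have := ler_normD (x i ord0) (y i ord0); lra.
have h5 := hg i.
have h6 : 0 <= `|x i ord0 - y i ord0| by [].
have h7 : 0 <= `|x i ord0 + y i ord0| by [].
have h8 : 0 <= `|g i| by [].
have : `|x i ord0 - y i ord0| * `|x i ord0 + y i ord0| <= e * 3.
  by apply: ler_pM.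
have : 0 <= `|x i ord0 - y i ord0| * `|x i ord0 + y i ord0| by apply: mulr_ge0.
nra.
Qed.

Lemma eq0_small (z K : R) : 0 <= K -> (forall e : R, 0 < e -> e <= 1 -> `|z| <= K * e) -> z = 0.
Proof.
move=> hK H; apply/eqP; apply/negPn/negP => hz.
have hz' : 0 < `|z| by rewrite normr_gt0.
set e := Num.min 1 (`|z| / (2 * (K + 1))).
have e0 : 0 < e by rewrite lt_min ltr01 /= divr_gt0 //; lra.
have e1 : e <= 1 by rewrite ge_min lexx.
have e2 : e <= `|z| / (2 * (K + 1)) by rewrite ge_min lexx orbT.
have := H e e0 e1.
have : K * e <= K * (`|z| / (2 * (K + 1))) by apply: ler_wpM2l.
have : K * (`|z| / (2 * (K + 1))) < `|z|.
  rewrite mulrA ltr_pdivrMr; last lra.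
  nra.
lra.
Qed.

End Fin.

End A7.
Import A7.

Module A8.
Import Order.TTheory GRing.Theory Num.Theory.
Local Open Scope ring_scope.
Set Implicit Arguments. Unset Strict Implicit. Unset Printing Implicit Defensive.

Section Main.
Variable R : realType.
Variables (b0 b1 : bool) (m : nat) (c s : nat -> R) (v0 : 'cV[R]_(dimA b0 m b1)).
Hypothesis hcs : forall j, (1 <= j <= m)%N -> c j ^+ 2 + s j ^+ 2 = 1.
Hypothesis hmono : forall j, (j <= m)%N -> cext m c j < cext m c j.+1.
Hypothesis hv0 : vnorm v0 = 1.

Local Notation N := (dimA b0 m b1).
Local Notation A := (Amat b0 m b1 c s).
Local Notation d := (@dA R b0 b1 m c).

Lemma gA : goodB d A.
Proof. split; [exact: A_HO|exact: A_HD|exact: A_Hd]. Qed.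

Lemma gAT : goodB d A^T.
Proof. exact: goodB_tr gA. Qed.

Definition Bs (t : nat) : 'M[R]_N := if odd t then A^T else A.

Fixpoint useq (t : nat) : 'cV[R]_N :=
  match t with 0 => v0 | t'.+1 => hs (Bs t') (useq t') end.

Lemma gBs t : goodB d (Bs t).
Proof. by rewrite /Bs; case: (odd t); [exact: gAT|exact: gA]. Qed.

Lemma urec t : useq t.+1 = hs (Bs t) (useq t).
Proof. by []. Qed.

Lemma useq_even k : useq k.*2 = aci A v0 k.
Proof.
elim: k => [|k IH] //.
rewrite doubleS /= /Bs /= odd_double /= IH.
by rewrite aci_stepE.
Qed.

Lemma u0 : sqs (fun _ => 1) (useq 0) = 1.
Proof. by rewrite /= -vnorm_sq hv0 expr1n. Qed.

Lemma dle1 i : d i ^+ 2 <= 1.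
Proof. exact: dA_sq. Qed.

Lemma d_bnd i : -1 <= d i <= 1.
Proof. have := dle1 i; move=> h; apply/andP; split; nra. Qed.

Lemma Wc_init j : blk_nz v0 j -> 0 < Wc d (cext m c j) v0.
Proof.
case=> i [hi hv].
rewrite /Wc /sqs (bigD1 i) //= ltr_pwDl //.
  by rewrite /dA hi eqxx mul1r exprn_even_gt0.
apply: sumr_ge0 => k _; apply: mulr_ge0; [by case: eqP|exact: sqr_ge0].
Qed.

Hypothesis hl : exists l, [/\ (1 <= l <= m)%N, blk_nz v0 l &
     exists j, blk_nz v0 j /\ cext m c l * cext m c j <= 0].

Lemma blk_nz_le j : blk_nz v0 j -> (j <= m.+1)%N.
Proof. by case=> i [<- _]; apply: blk_le. Qed.

Lemma sel : exists x y z : R, [/\ (-1 <= x) && (x <= 0), (0 <= y) && (y <= 1), -1 < x * y,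
   0 < Wc d x v0 /\ 0 < Wc d y v0 & (`|z| < 1 /\ 0 < Wc d z v0)].
Proof.
case: hl => l [hl1 hl2 [j [hj1 hj2]]].
have [/andP [cl1 cl2] _] := cext_rot hmono hl1.
have /andP [cj1 cj2] := cext_bnd hmono (blk_nz_le hj1).
have Wl := Wc_init hl2; have Wj := Wc_init hj1.
set cl := cext m c l in cl1 cl2 Wl hj2 *; set cj := cext m c j in cj1 cj2 Wj hj2 *.
have zl : `|cl| < 1 by rewrite ltr_norml cl1.
case: (ltgtP cl 0) => hc.
- exists cl, cj, cl; split => //.
  + by apply/andP; split; lra.
  + by apply/andP; split; nra.
  + nra.
- exists cj, cl, cl; split => //.
  + by apply/andP; split; nra.
  + by apply/andP; split; lra.
  + nra.
- exists cl, cl, cl; split => //; rewrite ?hc ?mulr0; try (apply/andP; split); lra.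
Qed.

Lemma sel2 : (exists i, d i <= 0) /\ (exists i, 0 <= d i).
Proof.
case: hl => l [hl1 [il [hil _]] [j [[ij [hij _]] hj2]]].
have ed (i : 'I_N) k : blockOf b0 m i = k -> d i = cext m c k by rewrite /dA => ->.
case: (lerP (cext m c l) 0) => h.
  split; first by exists il; rewrite (ed _ _ hil).
  case: (ltgtP (cext m c l) 0) => h'.
  - by exists ij; rewrite (ed _ _ hij); nra.
  - by move: h'; rewrite ltNge h.
  - by exists il; rewrite (ed _ _ hil) h'.
split; last by exists il; rewrite (ed _ _ hil) ltW.
by exists ij; rewrite (ed _ _ hij); nra.
Qed.

Lemma u1 t : sqs (fun _ => 1) (useq t) = 1 /\ exists z : R, `|z| < 1 /\ 0 < Wc d z (useq t).
Proof.
have [x [y [z [_ _ _ _ [z1 Wz]]]]] := sel.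
have [h1 h2] := inv_seq gBs urec u0 z1 Wz t.
by split => //; exists z.
Qed.

Lemma aci_u1 k : sqs (fun _ => 1) (aci A v0 k) = 1.
Proof. by rewrite -useq_even; case: (u1 k.*2). Qed.

Lemma small (L : R) : 0 < L -> exists t, `|aa d useq t| < L.
Proof.
move=> hL.
have [x [y [z [/andP [x1 x0] /andP [y0 y1] xy [Wx Wy] [z1 Wz]]]]] := sel.
exact: (dyn_main gBs urec u0 dle1 z1 Wz x1 x0 y0 y1 xy Wx Wy hL).
Qed.

Lemma aa_le t t' : (t <= t')%N -> `|aa d useq t'| <= `|aa d useq t|.
Proof.
have [x [y [z [_ _ _ _ [z1 Wz]]]]] := sel.
exact: (aa_mono_le gBs urec u0 dle1 z1 Wz).
Qed.

Lemma arith1 (K L : R) : 0 <= K -> 0 < L ->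
  [/\ 0 < Num.min 1 (L / (K + 1)), Num.min 1 (L / (K + 1)) <= 1 & K * Num.min 1 (L / (K + 1)) < L].
Proof.
move=> K0 hL.
have Kp : 0 < K + 1 by lra.
set e := Num.min 1 (L / (K + 1)).
have e0 : 0 < e by rewrite lt_min ltr01 /= divr_gt0.
have e1 : e <= 1 by rewrite ge_min lexx.
have e2 : e <= L / (K + 1) by rewrite ge_min lexx orbT.
split => //.
have : K * e <= K * (L / (K + 1)) by apply: ler_wpM2l.
have : K * (L / (K + 1)) < L.
  rewrite mulrA ltr_pdivrMr //.
  nra.
lra.
Qed.

Lemma arith2 (q a b L : R) : `|q| <= `|a| + b -> `|a| < L -> b < L -> `|q| = 2 * L -> False.
Proof. lra. Qed.

Lemma lim_props vs : is_limit_vector (aci A v0) vs ->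
  sqs (fun _ => 1) vs = 1 /\ sqs d vs = 0.
Proof.
move=> Hl.
have g1 : forall i : 'I_N, `|(fun _ => 1 : R) i| <= 1 by move=> i; rewrite normr1.
have gd : forall i : 'I_N, `|d i| <= 1 by move=> i; rewrite ler_norml d_bnd.
have K0 : 0 <= 3 * (N%:R : R) by apply: mulr_ge0; rewrite ?ler0n.
split.
  apply/eqP; rewrite -subr_eq0; apply/eqP; apply: (eq0_small K0) => e e0 e1.
  have [k [_ hk]] := Hl e e0 0%N.
  have := sqs_close g1 (aci_u1 k) hk e1.
  by rewrite aci_u1 distrC.
apply/eqP; apply/negPn/negP => hq.
set q := sqs d vs in hq.
have hq0 : 0 < `|q| by rewrite normr_gt0.
set L := `|q| / 2.
have hL : 0 < L by rewrite /L divr_gt0.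
have [t0 ht0] := small hL.
have [K [K0' HK]] : exists K : R, 0 <= K /\ 3 * N%:R = K by exists (3 * N%:R).
have [e0 e1 h3] := arith1 K0' hL.
set e := Num.min 1 (L / (K + 1)) in e0 e1 h3.
have [k [hk1 hk2]] := Hl e e0 t0.
have h1 := sqs_close gd (aci_u1 k) hk2 e1.
rewrite HK in h1.
have h2 : `|aa d useq k.*2| < L.
  apply: le_lt_trans ht0; apply: aa_le; apply: leq_trans hk1 _; rewrite -addnn leq_addr //.
move: h2; rewrite /aa useq_even => h2.
have h4 : `|q| <= `|sqs d (aci A v0 k)| + `|sqs d (aci A v0 k) - q|.
  rewrite {1}(_ : q = sqs d (aci A v0 k) - (sqs d (aci A v0 k) - q)); last by ring.
  exact: ler_normB.
have h5 : `|q| = 2 * L by rewrite /L; field.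
apply: (arith2 _ h2 _ h5); first exact: h4.
exact: le_lt_trans h1 h3.
Qed.

Lemma sq_le (v M : R) : 0 <= v -> 0 <= M -> v ^+ 2 <= M ^+ 2 -> v <= M.
Proof. move=> h1 h2 h3; nra. Qed.

Lemma arith3 (al a : R) : `|al| ^+ 2 = al ^+ 2 -> - (al * a) <= `|al| ->
  1 + al ^+ 2 - 2 * al * a <= (1 + `|al|) ^+ 2.
Proof. move=> h1 h2; nra. Qed.

Lemma arith4 (al di : R) : 0 <= al -> di <= 0 -> 1 <= 1 + al ^+ 2 - 2 * al * di.
Proof. move=> h1 h2; nra. Qed.

Lemma arith5 (al di : R) : al < 0 -> 0 <= di -> 1 <= 1 + al ^+ 2 - 2 * al * di.
Proof. move=> h1 h2; nra. Qed.

Lemma sqs_shift (al : R) (x : 'cV[R]_N) :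
  sqs (fun _ => 1) ((A - al%:M) *m x) = sqs (fun i => 1 + al ^+ 2 - 2 * al * d i) x.
Proof.
case: gA => HO HD Hd.
rewrite (keyW (g := fun _ => 1) al x HO HD) //.
by apply: sqs_ext => i; rewrite mul1r.
Qed.

Lemma AM1 (x : 'cV[R]_N) : sqs (fun _ => 1) (A *m x) = sqs (fun _ => 1) x.
Proof.
have := sqs_shift 0 x; rewrite (_ : A - 0%:M = A); last first.
  by apply/matrixP => i j; rewrite !mxE mul0rn subr0.
move=> ->; apply: sqs_ext => i; ring.
Qed.

Lemma sqs_delta (g : 'I_N -> R) (i : 'I_N) : sqs g (delta_mx i ord0) = g i.
Proof.
rewrite /sqs (bigD1 i) //= big1 ?addr0.
  by rewrite mxE !eqxx /= expr1n mulr1.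
by move=> k hk; rewrite mxE (negbTE hk) /= expr0n /= mulr0.
Qed.

Lemma opnormA : opnorm A = 1.
Proof.
rewrite /opnorm.
have -> : [set vnorm (A *m x) | x in [set x : 'cV[R]_N | vnorm x = 1]]%classic = [set 1]%classic.
  apply/seteqP; split => r.
    case=> x hx <- /=; apply: vnorm1; rewrite AM1 -vnorm_sq.
    by move: hx => /= ->; rewrite expr1n.
  move=> -> /=; exists v0 => //; apply: vnorm1; rewrite AM1 -vnorm_sq hv0 expr1n //.
exact: sup1.
Qed.

Lemma sqs_d_bnd (x : 'cV[R]_N) : sqs (fun _ => 1) x = 1 -> -1 <= sqs d x <= 1.
Proof.
move=> h; apply/andP; split.
  have : sqs (fun i => -1 * 1) x <= sqs d x.
    by apply: sqs_le => i; have /andP [] := d_bnd i; rewrite mulr1.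
  by rewrite sqsZ h mulr1.
by rewrite -h; apply: sqs_le => i; have /andP [] := d_bnd i.
Qed.

Lemma opnorm_shift (al : R) : 1 <= opnorm (A - al%:M).
Proof.
rewrite /opnorm.
set S := [set vnorm ((A - al%:M) *m x) | x in [set x : 'cV[R]_N | vnorm x = 1]]%classic.
have hub : has_ubound S.
  exists (1 + `|al|) => r [x hx <-].
  have hx1 : sqs (fun _ => 1) x = 1 by rewrite -vnorm_sq; move: hx => /= ->; rewrite expr1n.
  have /andP [a1 a2] := sqs_d_bnd hx1.
  have hv : vnorm ((A - al%:M) *m x) ^+ 2 = 1 + al ^+ 2 - 2 * al * sqs d x.
    rewrite vnorm_sq sqs_shift.
    have -> : (fun i => 1 + al ^+ 2 - 2 * al * d i) =
      (fun i => (1 + al ^+ 2) * 1 + (- (2 * al)) * d i) by apply/funext => i; ring.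
    by rewrite sqsD !sqsZ hx1; ring.
  have hv0' := vnorm_ge0 ((A - al%:M) *m x).
  set v := vnorm _ in hv hv0' *.
  set a := sqs d x in hv a1 a2.
  have hal := real_normK (num_real al).
  have hal0 : 0 <= `|al| by [].
  have : - (al * a) <= `|al|.
    apply: le_trans (ler_norm _) _; rewrite normrN normrM ler_piMr //.
    by rewrite ler_norml a1 a2.
  move=> h; apply: sq_le => //; first lra.
  by rewrite hv; apply: arith3.
have [i hi] := (sel2).1.
have [j hj] := (sel2).2.
case: (lerP 0 al) => hal.
  apply: le_trans (ub_le_sup hub _); last first.
    exists (delta_mx i ord0) => //=; apply: vnorm1; exact: sqs_delta.
  have hv := vnorm_sq ((A - al%:M) *m delta_mx i ord0); rewrite sqs_shift sqs_delta in hv.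
  apply: sq_le => //; first exact: vnorm_ge0.
  by rewrite hv expr1n; apply: arith4.
apply: le_trans (ub_le_sup hub _); last first.
  exists (delta_mx j ord0) => //=; apply: vnorm1; exact: sqs_delta.
have hv := vnorm_sq ((A - al%:M) *m delta_mx j ord0); rewrite sqs_shift sqs_delta in hv.
apply: sq_le => //; first exact: vnorm_ge0.
by rewrite hv expr1n; apply: arith5.
Qed.

End Main.

End A8.
Import A8.

Unset Implicit Arguments. Set Strict Implicit.
Import Order.TTheory GRing.Theory Num.Theory.
Local Open Scope ring_scope.

Theorem mainTheorem15 (R : realType) (b0 b1 : bool) (m : nat) (c s : nat -> R)
  (v0 : 'cV[R]_(dimA b0 m b1)) :
  (1 <= m)%N ->
  (forall j, (1 <= j <= m)%N -> c j ^+ 2 + s j ^+ 2 = 1) ->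
  (forall j, (1 <= j <= m)%N -> s j != 0) ->
  (forall j, (j <= m)%N -> cext m c j < cext m c j.+1) ->
  vnorm v0 = 1 ->
  (2 <= grade (Amat b0 m b1 c s) v0)%N ->
  (exists l, [/\ (1 <= l <= m)%N, blk_nz v0 l &
     exists j, blk_nz v0 j /\ cext m c l * cext m c j <= 0]) ->
  forall vs : 'cV[R]_(dimA b0 m b1),
    is_limit_vector (aci (Amat b0 m b1 c s) v0) vs ->
    [/\ qform (Amat b0 m b1 c s) vs vs = 0,
        vnorm (Amat b0 m b1 c s *m vs) ^+ 2 - (qform (Amat b0 m b1 c s) vs vs) ^+ 2 = 1,
        (forall alpha : R, opnorm (Amat b0 m b1 c s) <= opnorm (Amat b0 m b1 c s - alpha%:M)),
        opnorm (Amat b0 m b1 c s) = 1 &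
        vnorm (Amat b0 m b1 c s *m vs) = 1].
Proof.
move=> hm hcs hsn hmono hv0 hgrade hl vs Hvs.
have [L1 L2] := lim_props hcs hmono hv0 hl Hvs.
have qA : qform (Amat b0 m b1 c s) vs vs = 0.
  by rewrite (qform_d vs (A_HD b0 b1 m c s)) L2.
have nA : vnorm (Amat b0 m b1 c s *m vs) = 1.
  by apply: vnorm1; rewrite (AM1 hcs hmono) L1.
split => //.
- by rewrite nA qA expr1n expr0n /= subr0.
- by move=> al; rewrite (opnormA hcs hmono hv0); exact: opnorm_shift hcs hmono hl al.
- exact: opnormA hcs hmono hv0.
Qed.
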